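(* Let $\mathcal{I}$ be a finite set of items and $\mathcal{D}$ a transaction database over $\mathcal{I}$. Let $t_o \in \mathcal{D}$ be a transaction with itemset $T_o \subseteq \mathcal{I}$, and let $\mathcal{D}^- = \mathcal{D} \setminus \{t_o\}$. Define the obsolete closed itemsets $\mathcal{C}_O(\mathcal{D}) = \mathcal{C}(\mathcal{D}) \setminus \mathcal{C}(\mathcal{D}^-)$ and the demoted closed itemsets $\mathcal{C}_D(\mathcal{D}) = \{c \in \mathcal{C}(\mathcal{D}) \cap \mathcal{C}(\mathcal{D}^-) \mid \sigma_{\mathcal{D}^-}(c) = \sigma_{\mathcal{D}}(c) - 1\}$. Then $$\Delta(\mathcal{D}, t_o) := \{T_o \cap c \mid c \in \mathcal{C}(\mathcal{D})\} = \mathcal{C}_O(\mathcal{D}) \cup \mathcal{C}_D(\mathcal{D}).$$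
   Context: A transaction database $\mathcal{D}$ over a finite item set $\mathcal{I}$ is a finite set of transactions, each a pair $(j, Z)$ with $j$ a transaction identifier (tid, all tids distinct) and $Z \subseteq \mathcal{I}$ an itemset. For $X \subseteq \mathcal{I}$, its support set is $\tau_{\mathcal{D}}(X) = \{ j \mid (j,Z) \in \mathcal{D},\ X \subseteq Z\}$ and its support is $\sigma_{\mathcal{D}}(X) = |\tau_{\mathcal{D}}(X)|$. An itemset $X \subseteq \mathcal{I}$ is closed in $\mathcal{D}$ if no proper superset $Y \supsetneq X$ (with $Y \subseteq \mathcal{I}$) has $\sigma_{\mathcal{D}}(Y) = \sigma_{\mathcal{D}}(X)$; $\mathcal{C}(\mathcal{D})$ denotes the family of all closed itemsets of $\mathcal{D}$ (in particular $\mathcal{I}$ itself is always closed). *)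

(* Defs.v *)
From mathcomp Require Import all_boot.
Set Implicit Arguments. Unset Strict Implicit. Unset Printing Implicit Defensive.

Section TDB.
Variables (J I : finType).
(* A transaction database: a finite set of (tid, itemset) pairs. *)
Definition tdb := {set (J * {set I})}.

Definition distinct_tids (D : tdb) : Prop :=
  forall t1 t2, t1 \in D -> t2 \in D -> t1.1 = t2.1 -> t1 = t2.

Definition supset (D : tdb) (X : {set I}) : {set J} :=
  [set j | [exists Z : {set I}, ((j, Z) \in D) && (X \subset Z)]].
Definition supp (D : tdb) (X : {set I}) : nat := #|supset D X|.

Definition closedb (D : tdb) (X : {set I}) : bool :=
  [forall Y : {set I}, (X \proper Y) ==> (supp D Y != supp D X)].

Definition closed_sets (D : tdb) : {set {set I}} := [set X | closedb D X].
End TDB.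

(* Main.v *)
Require Import Defs.
From mathcomp Require Import all_boot.
Set Implicit Arguments. Unset Strict Implicit. Unset Printing Implicit Defensive.

Section Aux.
Variables (J I : finType) (D : tdb J I) (to : J * {set I}).
Hypothesis Hd : distinct_tids D.
Hypothesis Hto : to \in D.

Lemma supset_sub (E : tdb J I) (X Y : {set I}) : X \subset Y -> supset E Y \subset supset E X.
Proof.
move=> XY; apply/subsetP=> j; rewrite !inE => /existsP[Z /andP[jZ YZ]].
apply/existsP; exists Z; rewrite jZ /=; exact: subset_trans YZ.
Qed.

Lemma notin_m (X : {set I}) : to.1 \notin supset (D :\ to) X.
Proof.
rewrite inE; apply/negP => /existsP[Z /andP[]]; rewrite !inE => /andP[ne inD] _.
have e := Hd inD Hto erefl; by rewrite e eqxx in ne.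
Qed.

Lemma in_to (Y : {set I}) : to.1 \in supset D Y -> Y \subset to.2.
Proof.
rewrite inE => /existsP[Z /andP[inD YZ]].
by have := Hd inD Hto erefl => <-.
Qed.

Lemma supset_in (X : {set I}) : X \subset to.2 -> supset D X = to.1 |: supset (D :\ to) X.
Proof.
move=> Xs; apply/setP=> j; rewrite !inE.
apply/existsP/idP.
  move=> [Z /andP[inD XZ]]; case: (eqVneq (j, Z) to) => [e|ne].
    by rewrite -e eqxx.
  apply/orP; right; apply/existsP; exists Z; by rewrite !inE ne inD XZ.
case/orP=> [/eqP->|/existsP[Z]].
  by exists to.2; rewrite -surjective_pairing Hto Xs.
rewrite !inE => /andP[/andP[_ inD] XZ]; by exists Z; rewrite inD XZ.
Qed.

Lemma supset_out (X : {set I}) : ~~ (X \subset to.2) -> supset D X = supset (D :\ to) X.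
Proof.
move=> Xs; apply/setP=> j; rewrite !inE.
apply/existsP/existsP => -[Z /andP[inD XZ]]; exists Z; rewrite XZ andbT.
  rewrite !inE inD andbT; apply/eqP => e; move: Xs; by rewrite -e XZ.
by move: inD; rewrite !inE => /andP[].
Qed.

Lemma supsetU (X Y : {set I}) : supset D (X :|: Y) = supset D X :&: supset D Y.
Proof.
apply/setP=> j; rewrite !inE; apply/existsP/andP.
  move=> [Z /andP[inD]]; rewrite subUset => /andP[h1 h2].
  by split; apply/existsP; exists Z; rewrite inD.
case=> /existsP[Z1 /andP[i1 s1]] /existsP[Z2 /andP[i2 s2]].
have e := Hd i1 i2 erefl; case: e => e; subst Z2.
by exists Z1; rewrite i1 subUset s1 s2.
Qed.

Lemma closedP (E : tdb J I) (X : {set I}) :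
  reflect (forall Y : {set I}, X \proper Y -> supp E Y != supp E X) (closedb E X).
Proof.
apply: (iffP forallP) => H Y; first by move=> p; have := H Y; rewrite p.
by apply/implyP; apply: H.
Qed.

Lemma supp_eq_sub (X Y : {set I}) : X \subset Y -> supp D Y = supp D X -> supset D Y = supset D X.
Proof.
move=> XY e; apply/eqP; rewrite eqEcard supset_sub //= /supp in e *; by rewrite e.
Qed.

Lemma closed_meet (c : {set I}) : closedb D c -> closedb D (to.2 :&: c).
Proof.
move=> /closedP Hc; apply/closedP => Y pY; apply/negP => /eqP e.
have sXY := proper_sub pY.
have eS := supp_eq_sub sXY e.
have Yto : Y \subset to.2.
  apply: in_to; rewrite eS supset_in ?subsetIl //; exact: setU11.
have pc : c \proper c :|: Y.
  rewrite properUl //; apply/negP => Yc.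
  move: pY; rewrite properEneq => /andP[/eqP ne _]; apply: ne.
  apply/eqP; by rewrite eqEsubset sXY /= subsetI Yto Yc.
have := Hc _ pc; rewrite /supp supsetU eS. move=> H; case/negP: H. rewrite (_ : supset D c :&: _ = supset D c) //.
by apply/setIidPl; apply: supset_sub; exact: subsetIr.
Qed.

Lemma closed_out (X : {set I}) : ~~ (X \subset to.2) -> closedb D X -> closedb (D :\ to) X.
Proof.
move=> Xs /closedP H; apply/closedP => Y pY.
have Ys : ~~ (Y \subset to.2).
  apply: contra Xs => Ys; exact: subset_trans (proper_sub pY) Ys.
by rewrite /supp -!supset_out //; apply: H.
Qed.
End Aux.

Theorem mainTheorem1 (J I : finType) (D : tdb J I) (to : J * {set I}) :
  distinct_tids D -> to \in D ->
  let Dm := D :\ to in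
  let To := to.2 in
  [set To :&: c | c in closed_sets D] =
    (closed_sets D :\: closed_sets Dm)
    :|: [set c in closed_sets D :&: closed_sets Dm | supp Dm c + 1 == supp D c].
Proof.
move=> Hd Hto Dm To; apply/setP => X; rewrite !inE.
apply/imsetP/idP.
  move=> [c]; rewrite inE => cc ->.
  have cl := closed_meet Hd Hto cc.
  rewrite cl /=.
  case: (boolP (closedb Dm _)) => //= _.
  rewrite /supp /Dm (supset_in Hto (subsetIl _ _)) cardsU1 (notin_m Hd Hto) addnC.
by [].
case/orP.
  case/andP=> cm cX; exists X; first by rewrite inE.
  apply/esym/setIidPr; apply: contraR cm => ns.
  exact: closed_out.
case/andP=> /andP[cX cm] /eqP es; exists X; first by rewrite inE.
apply/esym/setIidPr; case: (boolP (X \subset to.2)) => // ns; exfalso; move: es.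
rewrite /supp /Dm -(supset_out D ns) addn1 => /eqP; by rewrite eqn_leq ltnn.
Qed.
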